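(* For every integer $n\ge1$, $$\sum_{k=1}^n\frac{\binom{2n}{k}(-1)^k}{k}=-H_{2n}+\frac34\sum_{k=1}^n\frac{\binom{2k}{k}(-1)^k}{k}-\frac14\sum_{k=1}^n\frac{2k\binom{2k}{k}(-1)^k}{(2k-1)^2}.$$
   Context: $H_m=\sum_{j=1}^m1/j$. *)

(* Defs.v *)
From mathcomp Require Import all_boot all_algebra.
Set Implicit Arguments. Unset Strict Implicit. Unset Printing Implicit Defensive.
Import GRing.Theory Num.Theory.
Local Open Scope ring_scope.

Definition harmonic (m : nat) : rat := \sum_(1 <= j < m.+1) (j%:R)^-1.

(* Main.v *)
Require Import Defs.
From mathcomp Require Import all_boot all_algebra.
From mathcomp Require Import ring lra.
Import GRing.Theory Num.Theory.
Local Open Scope ring_scope.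

Definition f (m j : nat) : rat :=
  \sum_(1 <= k < j.+1) ('C(m, k)%:R * (-1) ^+ k / k%:R).

Lemma fstep m j : f m.+1 j = f m j + ((-1) ^+ j * 'C(m, j)%:R - 1) / (m.+1)%:R.
Proof.
elim: j => [|j IH].
  by rewrite /f !big_geq // bin0 expr0 mulr1 subrr mul0r addr0.
rewrite /f big_nat_recr //= -/(f m.+1 j) IH big_nat_recr //= -/(f m j).
have h := mul_bin_diag m.+1 j; rewrite /= in h.
have hR : (m.+1)%:R * 'C(m, j)%:R = (j.+1)%:R * 'C(m.+1, j.+1)%:R :> rat.
  by rewrite -!natrM h.
have hm : (m.+1)%:R != 0 :> rat by rewrite pnatr_eq0.
have hj : (j.+1)%:R != 0 :> rat by rewrite pnatr_eq0.
have e : 'C(m, j.+1)%:R = (m.+1)%:R * 'C(m, j)%:R / (j.+1)%:R - 'C(m, j)%:R :> rat.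
  by rewrite hR binS natrD mulrC mulrA mulVf // mul1r addrK.
rewrite binS natrD e exprS.
field.
by rewrite -!mulrS hm hj.
Qed.

Lemma harmS m : harmonic m.+1 = harmonic m + (m.+1)%:R^-1.
Proof. by rewrite /harmonic big_nat_recr. Qed.

Theorem mainTheorem13 (n : nat) (hn : (1 <= n)%N) :
  \sum_(1 <= k < n.+1) ('C(2 * n, k)%:R * (-1) ^+ k / k%:R : rat)
  = - harmonic (2 * n)
    + 3 / 4 * \sum_(1 <= k < n.+1) ('C(2 * k, k)%:R * (-1) ^+ k / k%:R : rat)
    - 1 / 4 * \sum_(1 <= k < n.+1)
        ((2 * k)%:R * 'C(2 * k, k)%:R * (-1) ^+ k / ((2 * k)%:R - 1) ^+ 2 : rat).
Proof.
clear hn.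
elim: n => [|n IH].
  by rewrite !big_geq // /harmonic big_geq // oppr0 !mulr0 !addr0 subr0.
rewrite -/(f _ _) in IH *.
have e2 : (2 * n.+1 = (2 * n).+2)%N by rewrite mulnS add2n.
rewrite e2 /f big_nat_recr //= -/(f _ n) fstep fstep -e2 IH.
rewrite (big_nat_recr n.+1) //= (big_nat_recr n.+1) //=.
rewrite e2 !harmS.
have h1 := mul_bin_left (2 * n).+1 n.
have h2 := mul_bin_diag (2 * n).+1 n.
have h3 := mul_bin_diag (2 * n).+2 n.
rewrite /= -e2 in h1 h2 h3.
have sub : ((2 * n).+1 - n = n.+1)%N by rewrite mul2n -addnn -addSn addnK.
rewrite sub in h1.
set c := 'C(2 * n, n) in h1 h2 h3 *.
rewrite e2 in h3.
have h1' : 'C((2 * n).+1, n.+1) = 'C((2 * n).+1, n).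
  by apply/eqP; rewrite -(eqn_pmul2l (ltn0Sn n)) h1.
rewrite h1' in h2.
have nz : (n.+1)%:R != 0 :> rat by rewrite pnatr_eq0.
have E1 : 'C((2*n).+1, n)%:R = ((2*n).+1)%:R * c%:R / (n.+1)%:R :> rat.
  by rewrite -natrM h2 natrM mulrC mulrA mulVf // mul1r.
have E2 : 'C((2*n).+2, n.+1)%:R = ((2*n).+2)%:R * 'C((2*n).+1, n)%:R / (n.+1)%:R :> rat.
  by rewrite -natrM h3 natrM mulrC mulrA mulVf // mul1r.
rewrite E2 E1.
move: (harmonic _) (\sum_(1 <= i < n.+1) _) (\sum_(1 <= i < n.+1) _) => H S1 S2.
rewrite -[(2 * n).+2]addn2 -[(2 * n).+1]addn1 -[n.+1]addn1 !natrD. rewrite exprD expr1.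
field.
have hN : 0 <= n%:R :> rat := ler0n _ _.
apply/and3P; split; rewrite lt0r_neq0 //; lra.
Qed.
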